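(* Let $G$ be a graph on $n$ vertices, where $n=20$ or $n=21$, with exactly $2n-1$ edges and maximum vertex degree at most four. Then $\mathcal{E}(G)<2(n-1)$.
   Context: All graphs are finite, simple and undirected. The energy $\mathcal{E}(G)$ of a graph $G$ is the sum of the absolute values of the eigenvalues of its adjacency matrix. *)

(* Defs.v *)
From mathcomp Require Import all_boot all_order all_algebra all_field.
Set Implicit Arguments. Unset Strict Implicit. Unset Printing Implicit Defensive.
Import Order.TTheory GRing.Theory Num.Theory.
Local Open Scope ring_scope.

Definition simple_graph (n : nat) (e : rel 'I_n) : Prop :=
  symmetric e /\ irreflexive e.

Definition num_edges (n : nat) (e : rel 'I_n) : nat :=
  #|[set p : 'I_n * 'I_n | (p.1 < p.2)%N && e p.1 p.2]|.

Definition degree (n : nat) (e : rel 'I_n) (x : 'I_n) : nat :=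
  #|[set y | e x y]|.

Definition adj_mx (n : nat) (e : rel 'I_n) : 'M[algC]_n :=
  \matrix_(i, j) (e i j)%:R.

(* the multiset of eigenvalues (roots of the characteristic polynomial,
   with multiplicity) *)
Definition eigenvalues (n : nat) (e : rel 'I_n) : seq algC :=
  sval (closed_field_poly_normal (char_poly (adj_mx e))).

Definition energy (n : nat) (e : rel 'I_n) : algC :=
  \sum_(z <- eigenvalues e) `|z|.

(* Main.v *)
Require Import Defs.
From mathcomp Require Import all_boot all_order all_algebra all_field.
From mathcomp Require Import ring zify.
Import Order.TTheory GRing.Theory Num.Theory.
Set Implicit Arguments. Unset Strict Implicit. Unset Printing Implicit Defensive.

Lemma degE n (e : rel 'I_n) i : degree e i = \sum_j (e i j : nat).
Proof.
rewrite /degree cardsE -sum1_card big_mkcond /=.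
by apply: eq_bigr => k _; rewrite unfold_in; case: (e i k).
Qed.

Definition cw n (e : rel 'I_n) i k := \sum_j (e i j * e j k)%N.

Lemma cw_sym n (e : rel 'I_n) : symmetric e -> forall i k, cw e i k = cw e k i.
Proof.
by move=> esym i k; apply: eq_bigr => j _; rewrite mulnC esym [e i j]esym.
Qed.

Lemma cw_diag n (e : rel 'I_n) : symmetric e -> forall i, cw e i i = degree e i.
Proof.
by move=> esym i; rewrite degE; apply: eq_bigr => j _; rewrite [e j i]esym; case: (e i j).
Qed.

Lemma cw_sum n (e : rel 'I_n) : symmetric e ->
  \sum_i \sum_k cw e i k = \sum_j (degree e j * degree e j)%N.
Proof.
move=> esym; rewrite /cw.
under eq_bigr do rewrite exchange_big /=.
rewrite exchange_big /=; apply: eq_bigr => j _.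
rewrite !degE big_distrl /=; apply: eq_bigr => i _.
by rewrite big_distrr /= [e j i]esym.
Qed.

Lemma tr4_nat n (e : rel 'I_n) : symmetric e ->
  (2 * \sum_i (degree e i * degree e i) <=
   \sum_i \sum_k (cw e i k * cw e i k) + \sum_i degree e i)%N.
Proof.
move=> esym; rewrite -big_split /= mul2n -addnn -{1}(cw_sum esym) -big_split /=.
apply: leq_sum => i _.
rewrite (bigD1 i) //= [X in (_ <= X + _)%N](bigD1 i) //= cw_diag //.
rewrite addnC -addnA leq_add2l addnC leq_add2r.
by apply: leq_sum => k _; case: (cw e i k) => // m; rewrite leq_pmulr.
Qed.

Lemma handshake n (e : rel 'I_n) : simple_graph e ->
  \sum_i degree e i = (2 * num_edges e)%N.
Proof.
case=> esym eirr.
have ne : num_edges e = \sum_(i : 'I_n) \sum_(j : 'I_n) ((i < j)%N && e i j : nat).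
  rewrite /num_edges cardsE -sum1_card big_mkcond /= pair_big /=.
  by apply: eq_bigr => p _; rewrite unfold_in; case: (_ && _).
have split1 : \sum_i degree e i =
   \sum_(i : 'I_n) \sum_(j : 'I_n) ((i < j)%N && e i j : nat) + \sum_(i : 'I_n) \sum_(j : 'I_n) ((j < i)%N && e i j : nat).
  rewrite -big_split /=; apply: eq_bigr => i _; rewrite degE -big_split /=.
  apply: eq_bigr => j _; case: (ltngtP i j) => h //=; first by rewrite addn0.
  have -> : i = j by apply: val_inj.
  by rewrite eirr.
rewrite split1 ne mul2n -addnn; congr (_ + _).
by rewrite [LHS]exchange_big; apply: eq_bigr => a _; apply: eq_bigr => b _; rewrite esym.
Qed.
Local Open Scope ring_scope.

Lemma adj_herm n (e : rel 'I_n) : symmetric e -> adj_mx e \is hermsymmx.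
Proof.
move=> esym; apply/is_hermitianmxP; rewrite expr0 scale1r.
by apply/matrixP => i j; rewrite !mxE conjC_nat esym.
Qed.

Lemma char_poly_similar n (P D : 'M[algC]_n) : P \in unitmx ->
  char_poly (invmx P *m D *m P) = char_poly D.
Proof.
move=> Pu.
have h : char_poly_mx (invmx P *m D *m P) =
   map_mx polyC (invmx P) *m char_poly_mx D *m map_mx polyC P.
  rewrite /char_poly_mx mulmxBr mulmxBl -!map_mxM mul_mx_scalar -scalemxAl.
  by rewrite -map_mxM mulVmx // map_mx1 scalemx1.
rewrite /char_poly h !det_mulmx mulrAC -det_mulmx -map_mxM mulVmx //.
by rewrite map_mx1 det1 mul1r.
Qed.

Lemma adj_spectral n (e : rel 'I_n) : symmetric e ->
  adj_mx e = invmx (spectralmx (adj_mx e)) *m diag_mx (spectral_diag (adj_mx e))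
     *m spectralmx (adj_mx e).
Proof.
by move=> esym; apply/orthomx_spectralP/hermitian_normalmx/adj_herm.
Qed.

Lemma energyE n (e : rel 'I_n) : symmetric e ->
  energy e = \sum_i `|spectral_diag (adj_mx e) 0 i|.
Proof.
move=> esym; set d := spectral_diag (adj_mx e).
have cp : char_poly (adj_mx e) = \prod_(i < n) ('X - (d 0 i)%:P).
  rewrite [in LHS](adj_spectral esym) char_poly_similar ?spectral_unit //.
  rewrite char_poly_trig ?diag_mx_is_trig //.
  by apply: eq_bigr => i _; rewrite mxE eqxx mulr1n.
rewrite /energy /eigenvalues; case: closed_field_poly_normal => s /= hs.
rewrite (monicP (char_poly_monic _)) scale1r in hs.
have : perm_eq s [seq d 0 i | i <- enum 'I_n].
  by apply: prod_XsubC_eq; rewrite -hs cp big_map big_enum.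
by move=> hp; rewrite (perm_big _ hp) big_map big_enum.
Qed.

Lemma row_deg n (e : rel 'I_n) j :
  \sum_k (e j k)%:R = (degree e j)%:R :> algC.
Proof.
rewrite /degree cardsE.
rewrite -sumr_const [RHS]big_mkcond /=. by apply: eq_bigr => k _; rewrite unfold_in; case: (e j k).
Qed.

Lemma eig_bound n (e : rel 'I_n) : symmetric e ->
  (forall x, (degree e x <= 4)%N) ->
  forall i, `|spectral_diag (adj_mx e) 0 i| <= 4.
Proof.
move=> esym hdeg i.
set d := spectral_diag (adj_mx e); set P := spectralmx (adj_mx e).
set A := adj_mx e.
have Pu : P \in unitmx by apply: spectral_unit.
have PA : P *m A = diag_mx d *m P.
  by rewrite /A [in LHS](adj_spectral esym) -/P -/d !mulmxA mulmxV // mul1mx.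
set v := row i P.
have vA : v *m A = d 0 i *: v.
  rewrite /v -row_mul PA; apply/rowP => k; rewrite mul_diag_mx !mxE.
  by [].
have vk k : d 0 i * v 0 k = \sum_j v 0 j * A j k.
  by have /rowP/(_ k) := vA; rewrite !mxE => <-.
have vnz : exists j, v 0 j != 0.
  apply/existsP; apply: contraT; rewrite negb_exists => /forallP h0.
  have : v *m invmx P = 0.
    have -> : v = 0 by apply/rowP => j; rewrite [RHS]mxE; apply/eqP; have := h0 j; rewrite negbK.
    by rewrite mul0mx.
  rewrite /v -row_mul mulmxV // => /rowP/(_ i); rewrite !mxE eqxx /=.
  by move/eqP; rewrite oner_eq0.
set S := \sum_j `|v 0 j|.
have Spos : 0 < S.
  rewrite lt_def sumr_ge0 ?andbT //; apply/eqP => /(psumr_eq0P (fun l _ => normr_ge0 (v 0 l))) h.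
  by case: vnz => j /negP; apply; rewrite -normr_eq0 h.
have : `|d 0 i| * S <= 4 * S.
  rewrite /S mulr_sumr.
  apply: (le_trans (y := \sum_k \sum_j `|v 0 j| * A j k)).
    apply: ler_sum => k _; rewrite -normrM vk.
    apply: (le_trans (ler_norm_sum _ _ _)); apply: ler_sum => l _.
    by rewrite normrM /A /adj_mx !mxE normr_nat.
  rewrite exchange_big mulr_sumr /=; apply: ler_sum => l _.
  rewrite -mulr_sumr mulrC; apply: ler_wpM2r => //.
  under eq_bigr do rewrite /A /adj_mx !mxE.
  by rewrite row_deg ler_nat.
by rewrite (ler_pM2r Spos).
Qed.

Lemma tr_conj n (P X : 'M[algC]_n) : P \in unitmx -> \tr (invmx P *m X *m P) = \tr X.
Proof. by move=> Pu; rewrite mxtrace_mulC mulmxA mulmxV // mul1mx. Qed.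

Lemma conj_mul n (P X Y : 'M[algC]_n) : P \in unitmx ->
  (invmx P *m X *m P) *m (invmx P *m Y *m P) = invmx P *m (X *m Y) *m P.
Proof.
move=> Pu; by rewrite !mulmxA -[_ *m P *m invmx P]mulmxA mulmxV // mulmx1.
Qed.

Lemma spec_tr2 n (e : rel 'I_n) : symmetric e ->
  \tr (adj_mx e *m adj_mx e) = \sum_i (spectral_diag (adj_mx e) 0 i) ^+ 2.
Proof.
move=> esym; rewrite [in LHS](adj_spectral esym) conj_mul ?spectral_unit //.
rewrite tr_conj ?spectral_unit // mulmx_diag mxtrace_diag.
by apply: eq_bigr => k _; rewrite mxE expr2.
Qed.

Lemma spec_tr4 n (e : rel 'I_n) : symmetric e ->
  \tr ((adj_mx e *m adj_mx e) *m (adj_mx e *m adj_mx e))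
   = \sum_i (spectral_diag (adj_mx e) 0 i) ^+ 4.
Proof.
move=> esym; rewrite [in LHS](adj_spectral esym) !conj_mul ?spectral_unit //.
rewrite tr_conj ?spectral_unit // !mulmx_diag mxtrace_diag.
by apply: eq_bigr => i _; rewrite !mxE; ring.
Qed.

Lemma A2E n (e : rel 'I_n) i k : (adj_mx e *m adj_mx e) i k = (cw e i k)%:R.
Proof.
rewrite !mxE /cw natr_sum; apply: eq_bigr => j _.
by rewrite /adj_mx !mxE natrM.
Qed.

Lemma tr2E n (e : rel 'I_n) : symmetric e ->
  \tr (adj_mx e *m adj_mx e) = (\sum_i degree e i)%:R.
Proof.
move=> esym; rewrite /mxtrace natr_sum; apply: eq_bigr => i _.
by rewrite A2E cw_diag.
Qed.

Lemma tr4E n (e : rel 'I_n) : symmetric e ->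
  \tr ((adj_mx e *m adj_mx e) *m (adj_mx e *m adj_mx e)) =
  (\sum_i \sum_k (cw e i k * cw e i k))%:R.
Proof.
move=> esym; rewrite /mxtrace natr_sum; apply: eq_bigr => i _.
rewrite mxE natr_sum; apply: eq_bigr => k _.
by rewrite !A2E natrM (cw_sym esym k i).
Qed.

Lemma sq7 k : (7 * k <= k * k + 12)%N.
Proof. case: k => [|[|[|[|k]]]] //. nia. Qed.

Lemma arith13 (a b c n : nat) : (2 * a <= b + c)%N -> (7 * c <= a + 12 * n)%N ->
  c = (2 * (2 * n - 1))%N -> (13 * c <= b + 24 * n)%N.
Proof. lia. Qed.

Lemma pt (x : algC) : x \is Num.real -> `|x| <= 4 ->
  2890 * `|x| + 27 * x ^+ 4 <= 2200 + 1017 * x ^+ 2.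
Proof.
move=> xr hx; set t := `|x|.
have h2 : x ^+ 2 = t ^+ 2 by rewrite real_normK.
have h4 : x ^+ 4 = t ^+ 2 * t ^+ 2 by rewrite -h2 -exprD.
rewrite h4 h2 -subr_ge0.
have -> : 2200 + 1017 * t ^+ 2 - (2890 * t + 27 * (t ^+ 2 * t ^+ 2)) =
  (3 * t - 5) ^+ 2 * ((4 - t) * (22 + 3 * t)) by ring.
have t0 : 0 <= t := normr_ge0 x.
have t4 : 0 <= 4 - t by rewrite subr_ge0.
apply: mulr_ge0.
  by rewrite -realEsqr rpredB ?rpredM ?rpred_nat ?normr_real.
by rewrite mulr_ge0 // addr_ge0 ?mulr_ge0 ?ler0n.
Qed.

Unset Implicit Arguments.
Theorem theorem3p2 (n : nat) (e : rel 'I_n) :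
  (n = 20%N \/ n = 21%N) ->
  simple_graph e ->
  num_edges e = (2 * n - 1)%N ->
  (forall x : 'I_n, (degree e x <= 4)%N) ->
  energy e < 2 * (n - 1)%:R.
Proof.
move=> hn sg hm hdeg; have [esym eirr] := sg.
have n17 : (17 <= n)%N by case: hn => ->.
set d := spectral_diag (adj_mx e).
have dr : forall i, d 0 i \is Num.real.
  by move=> i; apply: (mxOverP (hermitian_spectral_diag_real (adj_herm esym))).
set S1 := (\sum_i degree e i)%N.
set T4 := (\sum_i \sum_k (cw e i k * cw e i k))%N.
have hS1 : S1 = (2 * (2 * n - 1))%N by rewrite /S1 handshake // hm.
have hT : (13 * S1 <= T4 + 24 * n)%N.
  have h1 := tr4_nat esym.
  have h2 : (7 * S1 <= \sum_i (degree e i * degree e i) + 12 * n)%N.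
    have h12 : (\sum_(i < n) 12 = 12 * n)%N by rewrite sum_nat_const card_ord mulnC.
    rewrite /S1 -h12 -big_split big_distrr /=; apply: leq_sum => i _; exact: sq7.
  rewrite -/S1 -/T4 in h1; exact: arith13 h1 h2 hS1.
have key : 2890 * energy e + 27 * T4%:R <= 2200 * n%:R + 1017 * S1%:R.
  rewrite energyE //.
  have : \sum_i (2890 * `|d 0 i| + 27 * d 0 i ^+ 4) <= \sum_i (2200 + 1017 * d 0 i ^+ 2).
    by apply: ler_sum => i _; apply: pt; [exact: dr | exact: eig_bound].
  rewrite big_split -!mulr_sumr big_split -!mulr_sumr sumr_const card_ord.
  rewrite -(spec_tr4 esym) -(spec_tr2 esym).
  rewrite tr4E // tr2E // -/S1 -/T4 -[2200 *+ n]mulr_natr.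
  by move=> h; exact: h.
have hS1r : (S1%:R : algC) = 4 * n%:R - 2.
  rewrite hS1 natrM natrB ?natrM; first by ring.
  by case: hn => ->.
have hTr : 13 * (S1%:R : algC) <= T4%:R + 24 * n%:R.
  by rewrite -!natrM -natrD ler_nat.
have hn1 : ((n - 1)%:R : algC) = n%:R - 1 by rewrite natrB // (leq_trans _ n17).
have hnm : (n%:R : algC) = (n - 17)%:R + 17 by rewrite natrB // addrNK.
rewrite hn1; rewrite hS1r in key hTr.
set E := energy e in key *; set nr := (n%:R : algC) in key hTr hnm *.
set mr := ((n - 17)%:R : algC) in hnm.
set T := (T4%:R : algC) in key hTr.
rewrite -subr_gt0 -(pmulr_rgt0 _ (_ : (0 : algC) < 2890)) //.
have -> : 2890 * (2 * (nr - 1) - E) =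
  (2200 * nr + 1017 * (4 * nr - 2) - (2890 * E + 27 * T))
  + 27 * (T + 24 * nr - 13 * (4 * nr - 2)) + (268 * mr + 108).
  by rewrite hnm; ring.
rewrite ltr_wpDl //; last by rewrite ltr_wpDl ?mulr_ge0 ?ler0n.
by rewrite addr_ge0 ?mulr_ge0 ?ler0n // subr_ge0.
Qed.
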